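(* For every integer $n\ge 2$ and every $L=2^n+k$ with $0\le k<2^n$, $$\mathcal{C}(L+1)-\mathcal{C}(L)=\begin{cases}3, & 0\le k<2^{n-1},\\ 2, & 2^{n-1}\le k<2^n.\end{cases}$$
   Context: Let $\mathcal{A}=\{a,x,y,z\}$ and let $\tau$ be the substitution (monoid morphism on finite words over $\mathcal{A}$) defined by $\tau(a)=axa$, $\tau(x)=y$, $\tau(y)=z$, $\tau(z)=x$. For a finite word $w$, $\mathrm{Sub}(w)$ denotes the set of finite (contiguous) subwords of $w$. Let $\mathrm{Sub}_\tau=\bigcup_{s\in\mathcal{A},\,n\in\mathbb{N}\cup\{0\}}\mathrm{Sub}(\tau^n(s))$. The word complexity is $\mathcal{C}(L)=$ the number of elements of $\mathrm{Sub}_\tau$ of length $L$. *)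

(* Defs.v *)
From HB Require Import structures.
From mathcomp Require Import all_boot.
From Stdlib Require Import ClassicalDescription.
Set Implicit Arguments. Unset Strict Implicit. Unset Printing Implicit Defensive.

Inductive letter := La | Lx | Ly | Lz.

Definition letter_code (l : letter) : 'I_4 :=
  match l with La => inord 0 | Lx => inord 1 | Ly => inord 2 | Lz => inord 3 end.
Definition letter_decode (i : 'I_4) : letter :=
  match val i with 0 => La | 1 => Lx | 2 => Ly | _ => Lz end.
Lemma letter_codeK : cancel letter_code letter_decode.
Proof. by case; rewrite /letter_decode /= inordK. Qed.
HB.instance Definition _ := Finite.copy letter (can_type letter_codeK).

Definition tau_letter (l : letter) : seq letter :=
  match l with
  | La => [:: La; Lx; La]
  | Lx => [:: Ly]
  | Ly => [:: Lz]
  | Lz => [:: Lx]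
  end.
Definition tau (w : seq letter) : seq letter := flatten (map tau_letter w).

Definition in_Sub_tau (u : seq letter) : Prop :=
  exists (s : letter) (n : nat), infix u (iter n tau [:: s]).

Definition decP (P : Prop) : bool :=
  if excluded_middle_informative P then true else false.

Definition complexity (L : nat) : nat :=
  #|[set t : L.-tuple letter | decP (in_Sub_tau (val t))]|.

(* Main.v *)
Require Import Defs.
From mathcomp Require Import all_boot zify.
From Stdlib Require Import ClassicalDescription.
Set Implicit Arguments. Unset Strict Implicit. Unset Printing Implicit Defensive.

Definition g (c : letter) : letter :=
  match c with La => Lx | Lx => Ly | Ly => Lz | Lz => Lx end.
Definition leqb (c d : letter) : bool :=
  match c, d with La, La | Lx, Lx | Ly, Ly | Lz, Lz => true | _, _ => false end.
Lemma letter_eqE c d : (c == d) = leqb c d.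
Proof. by apply/eqP/idP => [->|]; case: c; case: d. Qed.

Lemma decPP (P : Prop) : Defs.decP P = true <-> P.
Proof. unfold Defs.decP; destruct (excluded_middle_informative P); split; auto; discriminate. Qed.

Fixpoint uf (f i : nat) : letter :=
  if f is f'.+1 then (if odd i then g (uf f' i./2) else La) else La.
Definition u i := uf i.+1 i.

Lemma uf_ok f f' i : i < f -> i < f' -> uf f i = uf f' i.
Proof.
elim: f f' i => [|f IH] [|f'] i //= h1 h2.
case: ifP => // oi; congr g; apply: IH; lia.
Qed.

Lemma uE i : u i = if odd i then g (u i./2) else La.
Proof.
rewrite {1}/u [uf i.+1 i]/=; case: ifP => // oi; congr g; rewrite /u; apply: uf_ok; lia.
Qed.

Lemma u2 q : u (2 * q) = La.
Proof. by rewrite uE oddM. Qed.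
Lemma u21 q : u (2 * q + 1) = g (u q).
Proof. rewrite uE addn1 /= oddM /=. by have -> : uphalf (2 * q) = q by lia. Qed.
Lemma g_neq c : g c != La. Proof. by rewrite letter_eqE; case: c. Qed.
Lemma nat_dec j : exists q, j = 2 * q \/ j = 2 * q + 1.
Proof. exists j./2; lia. Qed.
Lemma uLa i : (u i == La) = ~~ odd i.
Proof.
case: (nat_dec i) => q [->|->]; first by rewrite u2 eqxx; apply/esym; lia.
by rewrite u21 (negbTE (g_neq _)); apply/esym; lia.
Qed.

Lemma uper m j : j.+1 < 2 ^ m -> u (2 ^ m + j) = u j.
Proof.
elim: m j => [|m IH] j; first by rewrite expn0.
move=> hj; case: (nat_dec j) => q [hq|hq]; subst j.
  have -> : 2 ^ m.+1 + 2 * q = 2 * (2 ^ m + q) by rewrite expnS; lia.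
  by rewrite !u2.
have -> : 2 ^ m.+1 + (2 * q + 1) = 2 * (2 ^ m + q) + 1 by rewrite expnS; lia.
rewrite !u21 IH //; move: hj; rewrite expnS; lia.
Qed.

Lemma utop m : u (2 ^ m.+1 - 1) = iter m g Lx.
Proof.
elim: m => [|m IH] //.
have -> : 2 ^ m.+2 - 1 = 2 * (2 ^ m.+1 - 1) + 1.
  have := expn_gt0 2 m.+1; rewrite [2 ^ m.+2]expnS; lia.
by rewrite u21 IH.
Qed.

Lemma tau_cat s1 s2 : tau (s1 ++ s2) = tau s1 ++ tau s2.
Proof. by rewrite /tau map_cat flatten_cat. Qed.
Lemma iter_tau_cat n s1 s2 : iter n tau (s1 ++ s2) = iter n tau s1 ++ iter n tau s2.
Proof. by elim: n => //= n ->; rewrite tau_cat. Qed.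
Lemma iter_g_neq n : iter n g Lx != La.
Proof. by case: n => [|n] /=; [rewrite letter_eqE|apply: g_neq]. Qed.
Lemma tau1 c : c != La -> tau [:: c] = [:: g c].
Proof. by rewrite letter_eqE; case: c. Qed.
Lemma iter_tau_x n : iter n tau [:: Lx] = [:: iter n g Lx].
Proof. elim: n => //= n ->; apply: tau1; exact: iter_g_neq. Qed.

Definition A n := iter n tau [:: La].
Lemma A_S n : A n.+1 = A n ++ [:: iter n g Lx] ++ A n.
Proof.
rewrite /A iterSr (_ : tau [:: La] = [:: La] ++ [:: Lx] ++ [:: La]) //.
by rewrite !iter_tau_cat iter_tau_x.
Qed.
Lemma size_A n : size (A n) = 2 ^ n.+1 - 1.
Proof.
elim: n => [|n IH] //; rewrite A_S !size_cat IH /= (expnS 2 n.+1).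
have := expn_gt0 2 n.+1; lia.
Qed.
Lemma nth_A n i : i < size (A n) -> nth La (A n) i = u i.
Proof.
elim: n i => [|n IH] i; first by case: i.
rewrite A_S !size_cat /= => hi; rewrite nth_cat.
case: ifP => [h|h]; first exact: IH.
have hs := size_A n.
case E: (i - size (A n)) => [|j] /=.
  have -> : i = 2 ^ n.+1 - 1 by move: h E; rewrite hs; lia.
  by rewrite utop.
rewrite IH; last by lia.
have -> : i = 2 ^ n.+1 + j by move: h E; rewrite hs; have := expn_gt0 2 n.+1; lia.
symmetry; apply: uper; lia.
Qed.

Definition iswin (s : seq letter) := exists p, forall j, j < size s -> nth La s j = u (p + j).

Lemma iswin_infix w s : infix w s -> iswin s -> iswin w.
Proof.
move=> /infixP [s1 [s2 ->]] [p hp]; exists (p + size s1) => j hj.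
have h := hp (size s1 + j); rewrite !size_cat in h.
have h' : size s1 + j < size s1 + (size w + size s2) by rewrite ltn_add2l ltn_addr.
move: (h h'); rewrite nth_cat (_ : (size s1 + j < size s1) = false); last by rewrite ltnNge leq_addr.
rewrite addKn nth_cat hj => ->; congr u; lia.
Qed.

Lemma iswin_A n : iswin (A n).
Proof. by exists 0 => j hj; rewrite nth_A. Qed.

Lemma inSub_iswin w : in_Sub_tau w <-> iswin w.
Proof.
split.
  move=> [s [n hin]]; apply: (iswin_infix hin); clear hin.
  have hx : forall m, iswin (iter m tau [:: Lx]).
    move=> m; apply: iswin_infix (iswin_A m.+1).
    by rewrite A_S iter_tau_x infix_infix.
  case: s.
  - exact: iswin_A.
  - exact: hx.
  - by rewrite (_ : [:: Ly] = tau [:: Lx]) // -iterSr; exact: hx.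
  - by rewrite (_ : [:: Lz] = tau (tau [:: Lx])) // -iterSr -iterSr; exact: hx.
move=> [p hp]; exists La, (p + size w); apply/infixP.
set n := p + size w.
have hn : p + size w <= size (A n).
  rewrite size_A; have := ltn_expl n (isT : 1 < 2); rewrite expnS; lia.
exists (take p (A n)), (drop (p + size w) (A n)).
have hw : w = take (size w) (drop p (A n)).
  apply: (@eq_from_nth _ La); first by rewrite size_takel // size_drop leq_subRL //; lia.
  move=> j hj; rewrite nth_take // nth_drop hp // nth_A //; lia.
transitivity (take p (A n) ++ take (size w) (drop p (A n)) ++ drop (size w) (drop p (A n))).
  by rewrite !cat_take_drop.
by rewrite -hw drop_drop addnC.
Qed.

Definition win (v : nat -> letter) (L : nat) : {set L.-tuple letter} :=
  [set t : L.-tuple letter | Defs.decP (exists p, forall j, j < L -> nth La t j = v (p + j))].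

Lemma winP v L (t : L.-tuple letter) :
  reflect (exists p, forall j, j < L -> nth La t j = v (p + j)) (t \in win v L).
Proof. rewrite inE; apply: (iffP idP) => /decPP //. Qed.

Lemma complexity_win L : complexity L = #|win u L|.
Proof.
apply: eq_card => t; rewrite inE; apply/idP/winP.
  by move=> /decPP /inSub_iswin; rewrite /iswin size_tuple.
by move=> h; apply/decPP/inSub_iswin; rewrite /iswin size_tuple.
Qed.

Definition mkt n (f : nat -> letter) : n.-tuple letter :=
  @Tuple n _ (mkseq f n) (introT eqP (size_mkseq f n)).
Lemma nth_mkt n f i : i < n -> nth La (mkt n f) i = f i.
Proof. by move=> hi; rewrite /= nth_mkseq. Qed.
Lemma teq n (t1 t2 : n.-tuple letter) :
  (forall j, j < n -> nth La t1 j = nth La t2 j) -> t1 = t2.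
Proof.
move=> h; apply: val_inj; apply: (@eq_from_nth _ La); first by rewrite !size_tuple.
by move=> j; rewrite size_tuple; exact: h.
Qed.

Lemma card_bij (T1 T2 : finType) (X : {set T1}) (Y : {set T2}) (f : T1 -> T2) :
  {in X &, injective f} -> (forall x, x \in X -> f x \in Y) ->
  (forall y, y \in Y -> exists2 x, x \in X & f x = y) -> #|X| = #|Y|.
Proof.
move=> inj fX surj; rewrite -(card_in_imset inj); apply: eq_card => y; apply/imsetP/idP => [[x hx ->]|hy]; first exact: fX.
by case: (surj y hy) => x hx <-; exists x.
Qed.

Definition u' i := g (u i).

Lemma split_card L : 0 < L -> #|win u L| = #|win u' L./2| + #|win u' (uphalf L)|.
Proof.
move=> L0; rewrite -(cardsID [set t : L.-tuple letter | nth La t 0 == La] (win u L)).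
congr (_ + _).
- apply: (card_bij (f := fun t : L.-tuple letter => mkt L./2 (fun j => nth La t (2 * j + 1)))).
  + have key : forall t, t \in win u L :&: [set t : L.-tuple letter | nth La t 0 == La] ->
        exists q, forall j, j < L -> nth La t j = u (2 * q + j).
      move=> t; rewrite in_setI => /andP [/winP [p hp]]; rewrite inE => h0.
      move: h0; rewrite hp // addn0 uLa => hp0.
      exists p./2 => j hj; rewrite hp //; congr u; lia.
    move=> t1 t2 /key [q1 h1] /key [q2 h2] he; apply: teq => j hj.
    case: (nat_dec j) => i [hi|hi]; subst j.
      by rewrite h1 // h2 // -!mulnDr !u2.
    have hi' : i < L./2 by lia.
    by have := congr1 (fun t : (L./2).-tuple letter => nth La t i) he; rewrite /= !nth_mkt.
  + move=> t; rewrite in_setI => /andP [/winP [p hp]]; rewrite inE => h0.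
    move: h0; rewrite hp // addn0 uLa => hp0.
    apply/winP; exists p./2 => j hj; rewrite nth_mkt // hp; last lia.
    have -> : p + (2 * j + 1) = 2 * (p./2 + j) + 1 by lia.
    by rewrite u21.
  + move=> y /winP [q hq].
    exists (mkt L (fun j => u (2 * q + j))).
      rewrite in_setI [in X in _ && X]inE nth_mkt // addn0 u2 eqxx andbT.
      by apply/winP; exists (2 * q) => j hj; rewrite nth_mkt.
    apply: teq => j hj; rewrite !nth_mkt //; last lia.
    by rewrite hq // addnA -mulnDr u21.
- apply: (card_bij (f := fun t : L.-tuple letter => mkt (uphalf L) (fun j => nth La t (2 * j)))).
  + have key : forall t, t \in win u L :\: [set t : L.-tuple letter | nth La t 0 == La] ->
        exists q, forall j, j < L -> nth La t j = u (2 * q + 1 + j).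
      move=> t; rewrite in_setD => /andP [h0 /winP [p hp]]; rewrite inE in h0.
      move: h0; rewrite hp // addn0 uLa negbK => hp0.
      exists p./2 => j hj; rewrite hp //; congr u; lia.
    move=> t1 t2 /key [q1 h1] /key [q2 h2] he; apply: teq => j hj.
    case: (nat_dec j) => i [hi|hi]; subst j.
      have hi' : i < uphalf L by lia.
      by have := congr1 (fun t : (uphalf L).-tuple letter => nth La t i) he; rewrite /= !nth_mkt.
    rewrite h1 // h2 //.
    have -> : 2 * q1 + 1 + (2 * i + 1) = 2 * (q1 + i + 1) by lia.
    have -> : 2 * q2 + 1 + (2 * i + 1) = 2 * (q2 + i + 1) by lia.
    by rewrite !u2.
  + move=> t; rewrite in_setD => /andP [h0 /winP [p hp]]; rewrite inE in h0.
    move: h0; rewrite hp // addn0 uLa negbK => hp0.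
    apply/winP; exists p./2 => j hj; rewrite nth_mkt // hp; last lia.
    have -> : p + 2 * j = 2 * (p./2 + j) + 1 by lia.
    by rewrite u21.
  + move=> y /winP [q hq].
    exists (mkt L (fun j => u (2 * q + 1 + j))).
      rewrite in_setD [in X in X && _]inE nth_mkt // addn0 u21 (negbTE (g_neq _)) /=.
      by apply/winP; exists (2 * q + 1) => j hj; rewrite nth_mkt.
    apply: teq => j hj; rewrite !nth_mkt //; last lia.
    have -> : 2 * q + 1 + 2 * j = 2 * (q + j) + 1 by lia.
    by rewrite hq // u21.
Qed.

Lemma g_inj c d : c != La -> d != La -> g c = g d -> c = d.
Proof. by rewrite !letter_eqE; case: c; case: d. Qed.
Lemma gx c : c != La -> g c = Lx -> c = Lz.
Proof. by rewrite !letter_eqE; case: c. Qed.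
Lemma gz c : g c = Lz -> c = Ly.
Proof. by case: c. Qed.

Lemma mixed p q : ~~ odd p -> odd q ->
  g (u p) = g (u q) -> g (u (p + 2)) = g (u (q + 2)) -> False.
Proof.
move=> hp hq e1 e2.
have hpa : forall i, ~~ odd i -> u i = La by move=> i hi; apply/eqP; rewrite uLa.
have hqa : forall i, odd i -> u i != La by move=> i hi; rewrite uLa hi.
rewrite hpa // in e1; rewrite hpa in e2; last by rewrite oddD addbF.
have z1 := gx (hqa _ hq) (esym e1).
have hq2 : odd (q + 2) by rewrite oddD addbF.
have z2 := gx (hqa (q + 2) hq2) (esym e2).
case: (nat_dec q) => r [hr|hr]; subst q; first by move: hq; rewrite oddM.
rewrite u21 in z1; have y1 := gz z1.
have : u (2 * r + 1 + 2) = u (2 * (r + 1) + 1) by congr u; lia.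
rewrite z2 u21 => /esym /gz y2.
case: (nat_dec r) => s [hs|hs]; subst r.
  by move: y1; rewrite u2.
have e : 2 * s + 1 + 1 = 2 * (s + 1) by lia.
by move: y2; rewrite e u2.
Qed.

Lemma card_win' m : 3 <= m -> #|win u' m| = #|win u m|.
Proof.
move=> m3; symmetry.
apply: (card_bij (f := fun t : m.-tuple letter => mkt m (fun j => g (nth La t j)))).
- move=> t1 t2 /winP [p hp] /winP [q hq] he.
  have hg : forall j, j < m -> g (u (p + j)) = g (u (q + j)).
    move=> j hj; rewrite -hp // -hq //.
    by have := congr1 (fun t : m.-tuple letter => nth La t j) he; rewrite /= !nth_mkt.
  apply: teq => j hj; rewrite hp // hq //.
  case E: (odd p == odd q).
    have oj : odd (q + j) = odd (p + j) by rewrite !oddD (eqP E).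
    case Ej: (odd (p + j)).
      apply: g_inj; [by rewrite uLa Ej | by rewrite uLa oj Ej | exact: hg].
    have a1 : u (p + j) = La by apply/eqP; rewrite uLa Ej.
    have a2 : u (q + j) = La by apply/eqP; rewrite uLa oj Ej.
    by rewrite a1 a2.
  have h0 : g (u p) = g (u q) by rewrite -(addn0 p) -(addn0 q); apply: hg; lia.
  have h2 : g (u (p + 2)) = g (u (q + 2)) by apply: hg; lia.
  exfalso; case Op: (odd p).
    have Oq : ~~ odd q by move: E; rewrite Op; case: (odd q).
    by apply: (@mixed q p) => //; rewrite ?Op.
  have Oq : odd q by move: E; rewrite Op; case: (odd q).
  by apply: (@mixed p q) => //; rewrite ?Op.
- move=> t /winP [p hp]; apply/winP; exists p => j hj.
  by rewrite nth_mkt // hp.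
- move=> y /winP [q hq]; exists (mkt m (fun j => u (q + j))).
    by apply/winP; exists q => j hj; rewrite nth_mkt.
  by apply: teq => j hj; rewrite !nth_mkt // hq.
Qed.

Lemma u_small : [/\ u 0 = La, u 1 = Lx, u 2 = La, u 3 = Ly & u 7 = Lz].
Proof. by []. Qed.

Lemma card_w1 : #|win u' 1| = 3.
Proof.
have -> : #|win u' 1| = #|Lx |: (Ly |: [set Lz])|.
  apply: (card_bij (f := fun t : 1.-tuple letter => nth La t 0)).
  - move=> t1 t2 _ _ e; apply: teq => j; rewrite ltnS leqn0 => /eqP ->; exact: e.
  - move=> t /winP [p hp]; rewrite hp // addn0 /u'.
    by case: (u p); rewrite !inE !letter_eqE.
  - move=> c; rewrite !inE !letter_eqE; case: c => //= _.
    + exists (mkt 1 (fun j => u' (0 + j))); last by rewrite nth_mkt.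
      by apply/winP; exists 0 => j hj; rewrite nth_mkt.
    + exists (mkt 1 (fun j => u' (1 + j))); last by rewrite nth_mkt.
      by apply/winP; exists 1 => j hj; rewrite nth_mkt.
    + exists (mkt 1 (fun j => u' (3 + j))); last by rewrite nth_mkt.
      by apply/winP; exists 3 => j hj; rewrite nth_mkt.
by rewrite !cardsU1 cards1 !inE !letter_eqE.
Qed.

Ltac w2 p := exists (mkt 2 (fun j => u' (p + j)));
  [ by apply/winP; exists p => j hj; rewrite nth_mkt
  | by rewrite !nth_mkt ].

Lemma card_w2 : #|win u' 2| = 5.
Proof.
have -> : #|win u' 2| = #|(Lx, Lx) |: ((Lx, Ly) |: ((Ly, Lx) |: ((Lx, Lz) |: [set (Lz, Lx)])))|.
  apply: (card_bij (f := fun t : 2.-tuple letter => (nth La t 0, nth La t 1))).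
  - move=> t1 t2 _ _ [e0 e1]; apply: teq => j.
    by case: j => [|[|]] //.
  - move=> t /winP [p hp]; rewrite hp // hp // addn0 /u'.
    case: (nat_dec p) => r [hr|hr]; subst p.
      rewrite u2 addn1 -addn1 u21.
      by case: (u r); rewrite !inE !xpair_eqE !letter_eqE.
    rewrite u21 (_ : 2 * r + 1 + 1 = 2 * (r + 1)); last lia.
    by rewrite u2; case: (u r); rewrite !inE !xpair_eqE !letter_eqE.
  - case=> c d; rewrite !inE !xpair_eqE !letter_eqE.
    case: c; case: d => //= _; first [ w2 6 | w2 0 | w2 1 | w2 2 | w2 3 ].
by rewrite !cardsU1 cards1 !inE !xpair_eqE !letter_eqE.
Qed.

Lemma C_even M : 3 <= M -> complexity (2 * M) = complexity M + complexity M.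
Proof.
move=> hM; rewrite !complexity_win split_card; last lia.
have -> : (2 * M)./2 = M by lia.
have -> : uphalf (2 * M) = M by lia.
by rewrite card_win'.
Qed.
Lemma C_odd M : 3 <= M -> complexity (2 * M + 1) = complexity M + complexity M.+1.
Proof.
move=> hM; rewrite !complexity_win split_card; last lia.
have -> : (2 * M + 1)./2 = M by lia.
have -> : uphalf (2 * M + 1) = M.+1 by lia.
by rewrite !card_win' //; lia.
Qed.
Lemma C3 : complexity 3 = 8.
Proof. by rewrite complexity_win split_card // card_w1 card_w2. Qed.
Lemma C4 : complexity 4 = 10.
Proof. by rewrite complexity_win split_card // card_w2. Qed.
Lemma C5 : complexity 5 = 13.
Proof. by rewrite complexity_win split_card // card_w2 card_win' // -complexity_win C3. Qed.

Theorem mainTheorem7 (n k : nat) (hn : 2 <= n) (hk : k < 2 ^ n) :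
  complexity (2 ^ n + k).+1 =
    complexity (2 ^ n + k) + (if k < 2 ^ n.-1 then 3 else 2).
Proof.
elim: n hn k hk => [|[|[|n]] IH] // _ k hk.
  have C6 : complexity 6 = 16 by rewrite (C_even (M := 3)) // C3.
  have C7 : complexity 7 = 18 by rewrite (C_odd (M := 3)) // C3 C4.
  have C8 : complexity 8 = 20 by rewrite (C_even (M := 4)) // C4.
  by case: k hk => [|[|[|[|]]]] // _; rewrite ?C4 ?C5 ?C6 ?C7 ?C8.
have h2 : 2 ^ n.+3 = 2 * 2 ^ n.+2 by rewrite expnS.
have h3 : 4 <= 2 ^ n.+2 by rewrite expnS expnS; have := expn_gt0 2 n; lia.
have h4 : 2 ^ n.+2 = 2 * 2 ^ n.+1 by rewrite expnS.
case: (nat_dec k) => k' [hk'|hk']; subst k.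
- have e1 : (2 ^ n.+3 + 2 * k').+1 = 2 * (2 ^ n.+2 + k') + 1 by lia.
  have e2 : 2 ^ n.+3 + 2 * k' = 2 * (2 ^ n.+2 + k') by lia.
  have Ec : (2 * k' < 2 ^ n.+2) = (k' < 2 ^ n.+1) by apply/idP/idP; lia.
  rewrite e1 e2 C_odd ?C_even; try lia.
  have := IH isT k'; rewrite /= => ->; last lia.
  by rewrite -addnA Ec.
- have e1 : (2 ^ n.+3 + (2 * k' + 1)).+1 = 2 * (2 ^ n.+2 + k').+1 by lia.
  have e2 : 2 ^ n.+3 + (2 * k' + 1) = 2 * (2 ^ n.+2 + k') + 1 by lia.
  have Ec : (2 * k' + 1 < 2 ^ n.+2) = (k' < 2 ^ n.+1) by apply/idP/idP; lia.
  rewrite e1 e2 C_odd ?C_even; try lia.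
  have := IH isT k'; rewrite /= => ->; last lia.
  rewrite Ec; set c := (if _ then _ else _); lia.
Qed.
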